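(* Fix integers $L\ge2$, $n$ divisible by $L$, $K\ge1$, and a class $\mathcal H$ of real functions of $s$. With the data, cross-fold risks $R,\widehat R$ and seminorm $\rho_N$ described in the context, suppose $Y\in[-1,1]$ almost surely and $\sup_{h\in\mathcal H}\|h\|_\infty\le1$. Then for every $\epsilon>0$, $\sup_{h_1,h_2\in\mathcal H:\ \rho_N(h_1-h_2)\le\epsilon}\big[(R(h_1)-\widehat R(h_1))-(R(h_2)-\widehat R(h_2))\big]\le2\epsilon.$
   Context: Data: $N=Kn$ independent observations $O_i=(A_i,S_i,Y_i)$, $A_i\in\{1,\dots,K\}$ the cell of unit $i$, each cell containing exactly $n$ units, i.i.d. within cell; fold labels $V_i\in\{1,\dots,L\}$ assigned independently of $(S,Y)$ with exactly $n/L$ units of each cell in each fold. Let $\tilde y(s,a,y)=y$. For $h$ a function of $s$ (or $\tilde y$, replacing $h(S_i)$ by $Y_i$): $[\Pi h](a)=E[h(S)\mid A=a]$, $[\widehat\Pi^v h](a)=(n/L)^{-1}\sum_i h(S_i)\mathbf 1\{A_i=a,V_i=v\}$, $[\widehat\Pi^{-v}h](a)=(n(L-1)/L)^{-1}\sum_i h(S_i)\mathbf 1\{A_i=a,V_i\neq v\}$. Population cross-fold risk $R(h)=-\frac1K\sum_{a}[\Pi\tilde y](a)[\Pi h](a)+\frac1{2K}\sum_a([\Pi h](a))^2$ (equivalently $-E[E[Y\mid A,V=\widetilde V]E[h(S)\mid A,V\ne\widetilde V]]+\frac12E[E[h(S)\mid A,V=\widetilde V]E[h(S)\mid A,V\ne\widetilde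 V]]$ with $\widetilde V$ an independent copy of the fold label); empirical cross-fold risk $\widehat R(h)=\frac1L\sum_{v=1}^L\frac1K\sum_{a=1}^K\big(-[\widehat\Pi^v\tilde y](a)[\widehat\Pi^{-v}h](a)+\frac12[\widehat\Pi^vh](a)[\widehat\Pi^{-v}h](a)\big)$. Norms: $\|f\|_{1,N}=\frac1N\sum_i|f(O_i)|$, $\|u\|_{1,K}=\frac1K\sum_a|u(a)|$, $\rho_N(f)=\|\Pi f\|_{1,K}+\|f\|_{1,N}$. *)

(* Defs.v *)
From HB Require Import structures.
From mathcomp Require Import all_boot all_order all_algebra.
From mathcomp Require Import all_classical all_reals all_analysis.
Set Implicit Arguments. Unset Strict Implicit. Unset Printing Implicit Defensive.
Import Order.TTheory GRing.Theory Num.Theory.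
Local Open Scope ring_scope.

(* Population conditional mean in cell a: the law of a generic observation of
   cell a is the probability [P a] on the sample space [Om]; the coordinates
   S and Y are the functions [Sv] and [Yv] on [Om].  [[Pi f](a) = E_{P a}[f]]. *)
Definition popPi d (Om : measurableType d) (R : realType) (K : nat)
  (P : 'I_K -> probability Om R) (f : Om -> R) (a : 'I_K) : R :=
  fine (\int[P a]_w (f w)%:E)%E.

Definition popRisk d (Om : measurableType d) (R : realType) (K : nat)
  (P : 'I_K -> probability Om R) (Ssp : Type) (Sv : Om -> Ssp) (Yv : Om -> R)
  (h : Ssp -> R) : R :=
  - (K%:R)^-1 * \sum_(a < K) popPi P Yv a * popPi P (h \o Sv) a
  + (2 * K%:R)^-1 * \sum_(a < K) (popPi P (h \o Sv) a) ^+ 2.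

Definition empPi_in (R : realType) (N K L n : nat) (A : 'I_N -> 'I_K)
  (V : 'I_N -> 'I_L) (f : 'I_N -> R) (v : 'I_L) (a : 'I_K) : R :=
  (n%:R / L%:R)^-1 * \sum_(i < N | (A i == a) && (V i == v)) f i.

Definition empPi_out (R : realType) (N K L n : nat) (A : 'I_N -> 'I_K)
  (V : 'I_N -> 'I_L) (f : 'I_N -> R) (v : 'I_L) (a : 'I_K) : R :=
  (n%:R * (L%:R - 1) / L%:R)^-1 * \sum_(i < N | (A i == a) && (V i != v)) f i.

Definition empRisk (R : realType) (N K L n : nat) (A : 'I_N -> 'I_K)
  (V : 'I_N -> 'I_L) (Ssp : Type) (S : 'I_N -> Ssp) (Y : 'I_N -> R)
  (h : Ssp -> R) : R :=
  (L%:R)^-1 * \sum_(v < L) ((K%:R)^-1 * \sum_(a < K)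
     (- empPi_in n A V Y v a * empPi_out n A V (fun i => h (S i)) v a
      + 2^-1 * empPi_in n A V (fun i => h (S i)) v a
             * empPi_out n A V (fun i => h (S i)) v a)).

Definition norm1N (R : realType) (N : nat) (f : 'I_N -> R) : R :=
  (N%:R)^-1 * \sum_(i < N) `|f i|.
Definition norm1K (R : realType) (K : nat) (u : 'I_K -> R) : R :=
  (K%:R)^-1 * \sum_(a < K) `|u a|.

Definition rhoN d (Om : measurableType d) (R : realType) (N K : nat)
  (P : 'I_K -> probability Om R) (Ssp : Type) (Sv : Om -> Ssp)
  (S : 'I_N -> Ssp) (f : Ssp -> R) : R :=
  norm1K (popPi P (f \o Sv)) + norm1N (fun i => f (S i)).

(* Main.v *)
From HB Require Import structures.
From mathcomp Require Import all_boot all_order all_algebra.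
From mathcomp Require Import all_classical all_reals all_analysis.
From mathcomp Require Import ring lra measurable_realfun.
Require Import Defs.
Import Order.TTheory GRing.Theory Num.Theory.
Local Open Scope ring_scope.

Lemma pop_term (R : realType) (y u w : R) : `|y| <= 1 -> `|u| <= 1 -> `|w| <= 1 ->
  `|(- (y * u) + 2^-1 * u ^+ 2) - (- (y * w) + 2^-1 * w ^+ 2)| <= 2 * `|u - w|.
Proof.
move=> hy hu hw.
have -> : (- (y * u) + 2^-1 * u ^+ 2) - (- (y * w) + 2^-1 * w ^+ 2)
  = (u - w) * (- y + 2^-1 * (u + w)) by ring.
rewrite normrM mulrC ler_wpM2r //.
move: hy hu hw; rewrite !ler_norml => /andP[? ?] /andP[? ?] /andP[? ?].
apply/andP; split; lra.
Qed.

Lemma emp_term (R : realType) (y i1 i2 o1 o2 : R) : `|y| <= 1 -> `|o1| <= 1 -> `|i2| <= 1 ->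
  `|(- y * o1 + 2^-1 * i1 * o1) - (- y * o2 + 2^-1 * i2 * o2)|
   <= 3 * 2^-1 * `|o1 - o2| + 2^-1 * `|i1 - i2|.
Proof.
move=> hy ho hi.
have -> : (- y * o1 + 2^-1 * i1 * o1) - (- y * o2 + 2^-1 * i2 * o2)
  = (o1 - o2) * (- y + 2^-1 * i2) + (2^-1 * o1) * (i1 - i2) by ring.
apply: le_trans (ler_normD _ _) _.
apply: lerD; rewrite normrM.
  rewrite mulrC ler_wpM2r //.
  move: hy hi; rewrite !ler_norml => /andP[? ?] /andP[? ?].
  apply/andP; split; lra.
rewrite ler_wpM2r //.
move: ho; rewrite !ler_norml => /andP[? ?].
apply/andP; split; lra.
Qed.
Section Emp.
Variables (R : realType) (N K L n : nat) (A : 'I_N -> 'I_K) (V : 'I_N -> 'I_L).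
Hypothesis hL : (2 <= L)%N.
Hypothesis hLn : (L %| n)%N.
Hypothesis hA : forall a : 'I_K, #|[set i | A i == a]| = n.
Hypothesis hAV : forall (a : 'I_K) (v : 'I_L), #|[set i | (A i == a) && (V i == v)]| = (n %/ L)%N.

Lemma cnt_in a v : \sum_(i < N | (A i == a) && (V i == v)) (1:R) = n%:R / L%:R.
Proof.
rewrite sumr_const -natf_div // -(hAV a v) cardsE //.
Qed.

Lemma cnt_all a : \sum_(i < N | (A i == a)) (1:R) = n%:R.
Proof.
rewrite sumr_const -(hA a) cardsE //.
Qed.


Lemma sum_v_in (F : 'I_N -> R) (a : 'I_K) :
  \sum_(v < L) \sum_(i < N | (A i == a) && (V i == v)) F i = \sum_(i < N | A i == a) F i.
Proof.
rewrite [RHS](partition_big V predT) //=.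
Qed.

Lemma sum_v_out (F : 'I_N -> R) (a : 'I_K) :
  \sum_(v < L) \sum_(i < N | (A i == a) && (V i != v)) F i
  = (L%:R - 1) * \sum_(i < N | A i == a) F i.
Proof.
have E v : \sum_(i < N | (A i == a) && (V i != v)) F i
   = \sum_(i < N | A i == a) F i - \sum_(i < N | (A i == a) && (V i == v)) F i.
  rewrite [X in _ = X - _](bigID (fun i => V i == v)) /=; ring.
under eq_bigr do rewrite E.
rewrite sumrB sum_v_in sumr_const card_ord -mulr_natl; ring.
Qed.

Lemma empPi_inB (f g : 'I_N -> R) v a :
  empPi_in n A V (fun i => f i - g i) v a = empPi_in n A V f v a - empPi_in n A V g v a.
Proof. by rewrite /empPi_in sumrB mulrBr. Qed.

Lemma empPi_outB (f g : 'I_N -> R) v a :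
  empPi_out n A V (fun i => f i - g i) v a = empPi_out n A V f v a - empPi_out n A V g v a.
Proof. by rewrite /empPi_out sumrB mulrBr. Qed.

Lemma empPi_in_norm (f : 'I_N -> R) v a :
  `|empPi_in n A V f v a| <= (n%:R / L%:R)^-1 * \sum_(i < N | (A i == a) && (V i == v)) `|f i|.
Proof.
rewrite /empPi_in normrM ger0_norm ?invr_ge0 ?divr_ge0 //.
by rewrite ler_wpM2l ?invr_ge0 ?divr_ge0 // ler_norm_sum.
Qed.

Lemma empPi_out_norm (f : 'I_N -> R) v a :
  `|empPi_out n A V f v a| <= (n%:R * (L%:R - 1) / L%:R)^-1 * \sum_(i < N | (A i == a) && (V i != v)) `|f i|.
Proof.
have hL0 : 0 <= (n%:R * (L%:R - 1) / L%:R :> R).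
  rewrite divr_ge0 // mulr_ge0 // subr_ge0 ler1n; exact: ltnW.
rewrite /empPi_out normrM ger0_norm ?invr_ge0 //.
by rewrite ler_wpM2l ?invr_ge0 // ler_norm_sum.
Qed.


Lemma invmul_le1 (c : R) : c^-1 * c <= 1.
Proof. by have [->|h] := eqVneq c 0; rewrite ?invr0 ?mul0r ?mulVf. Qed.

Lemma L_neq0 : (L%:R : R) != 0.
Proof. by rewrite pnatr_eq0 -lt0n; apply: leq_trans hL. Qed.

Lemma cnt_out a v : \sum_(i < N | (A i == a) && (V i != v)) (1:R) = n%:R * (L%:R - 1) / L%:R.
Proof.
have := cnt_all a; rewrite (bigID (fun i => V i == v)) /= cnt_in => E.
have -> : \sum_(i < N | (A i == a) && (V i != v)) (1:R) = n%:R - n%:R / L%:R.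
  by apply/eqP; rewrite eq_sym subr_eq -[X in X == _]E addrC.
by field; exact: L_neq0.
Qed.

Lemma in_bound (f : 'I_N -> R) v a : (forall i, `|f i| <= 1) -> `|empPi_in n A V f v a| <= 1.
Proof.
move=> hf; apply: le_trans (empPi_in_norm _ _ _) _.
apply: le_trans (invmul_le1 (n%:R / L%:R)).
rewrite ler_wpM2l ?invr_ge0 ?divr_ge0 // -(cnt_in a v).
by apply: ler_sum => i _.
Qed.

Lemma out_bound (f : 'I_N -> R) v a : (forall i, `|f i| <= 1) -> `|empPi_out n A V f v a| <= 1.
Proof.
move=> hf; apply: le_trans (empPi_out_norm _ _ _) _.
apply: le_trans (invmul_le1 (n%:R * (L%:R - 1) / L%:R)).
have hL0 : 0 <= (n%:R * (L%:R - 1) / L%:R :> R).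
  rewrite divr_ge0 // mulr_ge0 // subr_ge0 ler1n; exact: ltnW.
rewrite ler_wpM2l ?invr_ge0 // -(cnt_out a v).
by apply: ler_sum => i _.
Qed.


Hypothesis hK : (1 <= K)%N.
Hypothesis hN : N = (K * n)%N.

Lemma emp_diff (Ssp : Type) (S : 'I_N -> Ssp) (Y : 'I_N -> R) (h1 h2 : Ssp -> R) :
  (forall i, `|Y i| <= 1) -> (forall s, `|h1 s| <= 1) -> (forall s, `|h2 s| <= 1) ->
  `|empRisk n A V S Y h1 - empRisk n A V S Y h2|
    <= 2 * norm1N (fun i => h1 (S i) - h2 (S i)).
Proof.
move=> hY hh1 hh2.
set g := fun i => h1 (S i) - h2 (S i).
set ci := (n%:R / L%:R : R)^-1.
set co := (n%:R * (L%:R - 1) / L%:R : R)^-1.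
have ci0 : 0 <= ci by rewrite invr_ge0 divr_ge0.
have co0 : 0 <= co.
  rewrite invr_ge0 divr_ge0 // mulr_ge0 // subr_ge0 ler1n; exact: ltnW.
have Li0 : 0 <= (L%:R : R)^-1 by rewrite invr_ge0.
have Ki0 : 0 <= (K%:R : R)^-1 by rewrite invr_ge0.
apply: (@le_trans _ _ ((L%:R)^-1 * \sum_(v < L) ((K%:R)^-1 * \sum_(a < K)
   (3 * 2^-1 * (co * \sum_(i < N | (A i == a) && (V i != v)) `|g i|)
    + 2^-1 * (ci * \sum_(i < N | (A i == a) && (V i == v)) `|g i|))))).
  rewrite /empRisk -mulrBr -sumrB normrM ger0_norm // ler_wpM2l //.
  apply: le_trans (ler_norm_sum _ _ _) _; apply: ler_sum => v _.
  rewrite -mulrBr -sumrB normrM ger0_norm // ler_wpM2l //.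
  apply: le_trans (ler_norm_sum _ _ _) _; apply: ler_sum => a _.
  have := (@emp_term R _ (empPi_in n A V (fun i => h1 (S i)) v a) _ _ _ (in_bound Y v a hY) (out_bound _ v a (fun i => hh1 (S i)))
                   (in_bound _ v a (fun i => hh2 (S i)))). move=> X; apply: le_trans (X _) _.
  rewrite lerD // ler_wpM2l //.
    by have := empPi_out_norm g v a; rewrite /g empPi_outB.
  by have := empPi_in_norm g v a; rewrite /g empPi_inB.
have E1 : \sum_(v < L) ((K%:R)^-1 * \sum_(a < K)
   (3 * 2^-1 * (co * \sum_(i < N | (A i == a) && (V i != v)) `|g i|)
    + 2^-1 * (ci * \sum_(i < N | (A i == a) && (V i == v)) `|g i|)))
  = (K%:R)^-1 * ((3 * 2^-1 * co * (L%:R - 1) + 2^-1 * ci) * \sum_(i < N) `|g i|).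
  rewrite -mulr_sumr exchange_big /=; congr (_ * _).
  rewrite (partition_big A predT) //= mulr_sumr; apply: eq_bigr => a _.
  have SC c d (F : 'I_L -> R) : \sum_(v < L) c * (d * F v) = c * d * \sum_(v < L) F v.
    by rewrite mulr_sumr; apply: eq_bigr => v _; rewrite mulrA.
  rewrite big_split /= !SC sum_v_out sum_v_in; ring.
rewrite E1 /norm1N.
have -> : (N%:R : R) = K%:R * n%:R by rewrite hN natrM.
have [n0|n0] := eqVneq (n%:R : R) 0.
  by rewrite /ci /co n0 !(mul0r, invr0, mulr0, addr0).
have L1 : (L%:R - 1 : R) != 0.
  rewrite subr_eq0 pnatr_eq1; apply/eqP => E; move: hL; rewrite E.
  done.
have K0 : (K%:R : R) != 0 by rewrite pnatr_eq0 -lt0n.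
rewrite mulrA mulrA le_eqVlt; apply/orP; left; apply/eqP; rewrite /ci /co.
field; rewrite ?L_neq0 ?L1 ?K0 ?n0 //.
Qed.

End Emp.
Lemma popPi_bound d (Om : measurableType d) (R : realType) (K : nat)
  (P : 'I_K -> probability Om R) (f : Om -> R) (a : 'I_K) :
  measurable_fun setT f -> {ae P a, forall w, `|f w| <= 1} ->
  `|popPi P f a| <= 1.
Proof.
move=> mf hf.
have h1 : (`|\int[P a]_w (f w)%:E| <= 1)%E.
  apply: le_trans (le_abse_integral _ _ _) _ => //.
    exact/measurable_realfun.measurable_EFinP.
  apply: le_trans (ae_ge0_le_integral (f2 := fun _ => 1%E) _ _ _ _ _ _) _ => //.
  - have mE : measurable_fun setT (fun w => (f w)%:E : \bar R) by exact/measurable_realfun.measurable_EFinP.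
    have mA : measurable_fun setT (@abse R) by exact: measurable_realfun.abse_measurable.
    exact: (measurableT_comp mA mE).
  - apply: filterS hf => w hw _ /=; by rewrite lee_fin.
  by rewrite integral_cst // mul1e probability_le1.
rewrite /popPi; move: h1; case: (\int[P a]_w _)%E => [r| |] //=.
Qed.

Lemma popPi_integrable d (Om : measurableType d) (R : realType)
  (mu : probability Om R) (f : Om -> R) :
  measurable_fun setT f -> (forall w, `|f w| <= 1) ->
  mu.-integrable setT (EFin \o f).
Proof.
move=> mf hf.
apply: (le_integrable _ _ _ (finite_measure_integrable_cst mu 1 _)) => //.
  exact/measurable_realfun.measurable_EFinP.
by move=> w _ /=; rewrite lee_fin normr1.
Qed.

Lemma popPiB d (Om : measurableType d) (R : realType) (K : nat)
  (P : 'I_K -> probability Om R) (f g : Om -> R) (a : 'I_K) :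
  measurable_fun setT f -> (forall w, `|f w| <= 1) ->
  measurable_fun setT g -> (forall w, `|g w| <= 1) ->
  popPi P (fun w => f w - g w) a = popPi P f a - popPi P g a.
Proof.
move=> mf hf mg hg.
rewrite /popPi.
under eq_integral do rewrite EFinB.
have If := @popPi_integrable _ _ _ (P a) _ mf hf.
have Ig := @popPi_integrable _ _ _ (P a) _ mg hg.
rewrite integralB_EFin // fineB //; exact: integrable_fin_num.
Qed.

Lemma pop_diff d (Om : measurableType d) (R : realType) (K : nat)
  (P : 'I_K -> probability Om R) (Ssp : Type) (Sv : Om -> Ssp) (Yv : Om -> R)
  (h1 h2 : Ssp -> R) :
  (forall a, `|popPi P Yv a| <= 1) ->
  (forall a, `|popPi P (h1 \o Sv) a| <= 1) ->
  (forall a, `|popPi P (h2 \o Sv) a| <= 1) ->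
  (forall a, popPi P ((fun s => h1 s - h2 s) \o Sv) a
             = popPi P (h1 \o Sv) a - popPi P (h2 \o Sv) a) ->
  `|popRisk P Sv Yv h1 - popRisk P Sv Yv h2|
    <= 2 * norm1K (popPi P ((fun s => h1 s - h2 s) \o Sv)).
Proof.
move=> hy hu hw hB.
have popE h : popRisk P Sv Yv h = (K%:R)^-1 * \sum_(a < K)
   (- (popPi P Yv a * popPi P (h \o Sv) a) + 2^-1 * popPi P (h \o Sv) a ^+ 2).
  rewrite /popRisk big_split /= sumrN -big_distrr /= invfM; ring.
have Ki0 : 0 <= (K%:R : R)^-1 by rewrite invr_ge0.
rewrite !popE -mulrBr -sumrB normrM ger0_norm // /norm1K mulrCA ler_wpM2l //.
rewrite mulr_sumr; apply: le_trans (ler_norm_sum _ _ _) _; apply: ler_sum => a _.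
by rewrite hB; apply: pop_term.
Qed.

Theorem lemma4 (R : realType) (L n K : nat) (hL : (2 <= L)%N) (hLn : (L %| n)%N)
  (hK : (1 <= K)%N)
  (* population: law of a generic observation of each cell *)
  (dO : measure_display) (Om : measurableType dO)
  (dS : measure_display) (Ssp : measurableType dS)
  (P : 'I_K -> probability Om R) (Sv : Om -> Ssp) (Yv : Om -> R)
  (mSv : measurable_fun setT Sv) (mYv : measurable_fun setT Yv)
  (hYpop : forall a : 'I_K, {ae P a, forall w, -1 <= Yv w <= 1})
  (* realized data O_i = (A_i, S_i, Y_i) and fold labels V_i, i < N = K n *)
  (A : 'I_(K * n) -> 'I_K) (V : 'I_(K * n) -> 'I_L)
  (S : 'I_(K * n) -> Ssp) (Y : 'I_(K * n) -> R)
  (hA : forall a : 'I_K, #|[set i | A i == a]| = n)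
  (hAV : forall (a : 'I_K) (v : 'I_L), #|[set i | (A i == a) && (V i == v)]| = (n %/ L)%N)
  (hY : forall i, -1 <= Y i <= 1)
  (* the class H *)
  (H : set (Ssp -> R))
  (hHm : forall h, H h -> measurable_fun setT h)
  (hHb : forall h, H h -> forall s, `|h s| <= 1)
  (eps : R) (heps : 0 < eps) :
  forall h1 h2, H h1 -> H h2 ->
    rhoN P Sv S (fun s => h1 s - h2 s) <= eps ->
    (popRisk P Sv Yv h1 - empRisk n A V S Y h1)
      - (popRisk P Sv Yv h2 - empRisk n A V S Y h2) <= 2 * eps.
Proof.
move=> h1 h2 H1 H2 hrho.
have mh1 : measurable_fun setT (h1 \o Sv) by exact: measurableT_comp (hHm _ H1) mSv.
have mh2 : measurable_fun setT (h2 \o Sv) by exact: measurableT_comp (hHm _ H2) mSv.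
have bh1 w : `|(h1 \o Sv) w| <= 1 by exact: hHb.
have bh2 w : `|(h2 \o Sv) w| <= 1 by exact: hHb.
have hp := @pop_diff _ _ _ _ P _ Sv Yv h1 h2.
have bY a : `|popPi P Yv a| <= 1.
  apply: popPi_bound => //; apply: filterS (hYpop a) => w hw; by rewrite ler_norml.
have bP1 a : `|popPi P (h1 \o Sv) a| <= 1.
  by apply: popPi_bound => //; apply: filterE.
have bP2 a : `|popPi P (h2 \o Sv) a| <= 1.
  by apply: popPi_bound => //; apply: filterE.
have hp' := hp bY bP1 bP2 (fun a => @popPiB _ _ _ _ P _ _ a mh1 bh1 mh2 bh2).
have he := @emp_diff R (K * n) K L n A V hL hLn hA hAV hK erefl Ssp S Y h1 h2
  (fun i => ltac:(rewrite ler_norml; exact: hY)) (hHb _ H1) (hHb _ H2).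
move: hp' he hrho; rewrite /rhoN !ler_norml => /andP[? ?] /andP[? ?] ?.
lra.
Qed.
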